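(* Let $N\geq 3$ be prime, $q\in\mathbb{C}$ with $q^N=1$, $q\neq 1$, and let $X\subset\mathbb{R}^d$ be a convex subspace. Let $\tau\in C^q_m(X)$ and $\sigma\in C^q_n(X)$ be singular $q$-chains with $mn>0$. Then $$\partial(\tau*\sigma)=\partial(\tau)*\sigma+q^{m+1}\,\tau*\partial(\sigma).$$
   Context: Singular $q$-chains: $C^q_n(X)$ is the free $\mathbb{Z}[q]$-module with basis the continuous maps $\sigma:\Delta^n\to X$, where $\Delta^n\subset\mathbb{R}^{n+1}$ is the convex hull of the standard basis $e_0,\dots,e_n$. The $j$-th face of an $n$-simplex is $\partial_j\sigma=\sigma\circ\lambda_j$, where $\lambda_j:\Delta^{n-1}\to\Delta^n$ is the affine map sending $e_0,\dots,e_{n-1}$ in order to $e_0,\dots,\widehat{e_j},\dots,e_n$; the border map is $\partial=\sum_{j=0}^n q^j\partial_j$ on $C^q_n(X)$ for $n\geq1$, extended linearly. Convex product: for singular simplices $\tau:\Delta^m\to X$, $\sigma:\Delta^n\to X$, write points of $\Delta^{m+n+1}$ as $(\alpha;\beta)=(\alpha_0,\dots,\alpha_m;\beta_0,\dots,\beta_n)$, $|\alpha|=\sum\alpha_i$, $|\beta|=\sum\beta_j$; then $\tau*\sigma:\Delta^{m+n+1}\to X$ is $\tau(\alpha)$ if $|\beta|=0$, $\sigma(\beta)$ if $|\alpha|=0$, and $|\alpha|\,\tau(\alpha/|\alpha|)+|\beta|\,\sigma(\beta/|\beta|)$ otherwise. This is extended to a bilinear map $C^q_m(X)\times C^q_n(X)\to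 C^q_{m+n+1}(X)$. *)

(* Defs.v *)
From HB Require Import structures.
From mathcomp Require Import all_boot all_order all_algebra all_field.
From mathcomp Require Import all_classical all_reals all_analysis.
Set Implicit Arguments. Unset Strict Implicit. Unset Printing Implicit Defensive.
Import Order.TTheory GRing.Theory Num.Theory.
Import numFieldNormedType.Exports.
Local Open Scope ring_scope.
Local Open Scope classical_set_scope.

Section QChains.
Variables (R : realType) (d : nat).

(* Points of R^{k+1} are represented as functions nat -> R that vanish      *)
(* beyond index k.  The standard simplex Delta^k, in this representation:   *)
Definition stdsimplex (k : nat) (x : nat -> R) : Prop :=
  (forall i, 0 <= x i) /\ (forall i, (k < i)%N -> x i = 0) /\
  \sum_(i < k.+1) x i = 1.

Definition stdsimplex_rV (k : nat) : set 'rV[R]_(k.+1) :=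
  [set v | (forall i, 0 <= v 0 i) /\ \sum_i v 0 i = 1].

Definition ext (k : nat) (v : 'rV[R]_(k.+1)) : nat -> R :=
  fun i => if (i < k.+1)%N then v 0 (inord i) else 0.

(* a (candidate) singular simplex: a map into R^d; only its values on the   *)
(* standard simplex matter *)
Definition smap := (nat -> R) -> 'rV[R]_d.

Definition singular_simplex (X : set 'rV[R]_d) (k : nat) (s : smap) : Prop :=
  {within @stdsimplex_rV k, continuous (s \o @ext k)} /\
  (forall x, stdsimplex k x -> X (s x)).

Definition same_simplex (k : nat) (s t : smap) : Prop :=
  forall x, stdsimplex k x -> s x = t x.

(* lambda_j : Delta^{k-1} -> Delta^k, e_i |-> e_i (i<j), e_i |-> e_{i+1} (i>=j) *)
Definition lambda (j : nat) (x : nat -> R) : nat -> R :=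
  fun i => if (i < j)%N then x i else if i == j then 0 else x i.-1.

Definition face (j : nat) (s : smap) : smap := fun x => s (lambda j x).

(* chains: formal Z[q]-linear combinations, represented as finite lists *)
Definition chain := seq (algC * smap).

Definition in_Zq (q z : algC) : Prop :=
  exists p : {poly int}, z = (map_poly (fun k : int => k%:~R) p).[q].

Definition is_chain (q : algC) (X : set 'rV[R]_d) (k : nat) (c : chain) : Prop :=
  forall e, e \in c -> in_Zq q e.1 /\ singular_simplex X k e.2.

Definition coef (k : nat) (c : chain) (rho : smap) : algC :=
  \sum_(e <- c | `[< same_simplex k e.2 rho >]) e.1.

Definition chain_eq (k : nat) (c1 c2 : chain) : Prop :=
  forall rho, coef k c1 rho = coef k c2 rho.

Definition chain_scale (a : algC) (c : chain) : chain :=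
  [seq (a * e.1, e.2) | e <- c].

Definition border (q : algC) (k : nat) (c : chain) : chain :=
  if k is 0 then [::] else
  flatten [seq [seq (q ^+ j * e.1, face j e.2) | j <- iota 0 k.+1] | e <- c].

Definition conv (m n : nat) (t s : smap) : smap := fun x =>
  let alpha := fun i => if (i <= m)%N then x i else 0 in
  let beta := fun i => if (i <= n)%N then x (m.+1 + i)%N else 0 in
  let a := \sum_(i < m.+1) x i in
  let b := \sum_(i < n.+1) x (m.+1 + i)%N in
  if b == 0 then t alpha
  else if a == 0 then s beta
  else a *: t (fun i => alpha i / a) + b *: s (fun i => beta i / b).

Definition cprod (m n : nat) (c1 c2 : chain) : chain :=
  [seq (e1.1 * e2.1, conv m n e1.2 e2.2) | e1 <- c1, e2 <- c2].

End QChains.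

Definition convex_subset (R : realType) (d : nat) (X : set 'rV[R]_d) : Prop :=
  forall x y, X x -> X y -> forall t : R, 0 <= t -> t <= 1 ->
    X ((1 - t) *: x + t *: y).

(* Main.v *)
Require Import Defs.
From HB Require Import structures.
From mathcomp Require Import all_boot all_order all_algebra all_field.
From mathcomp Require Import all_classical all_reals all_analysis.
From mathcomp Require Import zify ring.
Import Order.TTheory GRing.Theory Num.Theory.
Import numFieldNormedType.Exports.
Local Open Scope ring_scope.

Section Aux.
Variables (R : realType) (d : nat).

Lemma lambda_if j N (f : nat -> R) (a : R) : (j <= N.+1)%N ->
  (fun k => (if (k <= N.+1)%N then lambda j f k else 0) / a) =
  lambda j (fun k => (if (k <= N)%N then f k else 0) / a).
Proof.
move=> hj; apply: funext => k; rewrite /lambda.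
case: (ltnP k j) => hkj.
  have h1 : (k <= N.+1)%N by lia.
  have h2 : (k <= N)%N by lia.
  by rewrite h1 h2.
case: eqP => [->|hne]; first by rewrite hj mul0r.
case: k hkj hne => [|k] /= hkj hne; first by lia.
by rewrite ltnS.
Qed.

Lemma lambda_if1 j N (f : nat -> R) : (j <= N.+1)%N ->
  (fun k => (if (k <= N.+1)%N then lambda j f k else 0)) =
  lambda j (fun k => (if (k <= N)%N then f k else 0)).
Proof.
move=> hj; apply: funext => k; rewrite /lambda.
case: (ltnP k j) => hkj.
  have h1 : (k <= N.+1)%N by lia.
  have h2 : (k <= N)%N by lia.
  by rewrite h1 h2.
case: eqP => [->|hne]; first by rewrite hj.
case: k hkj hne => [|k] /= hkj hne; first by lia.
by rewrite ltnS.
Qed.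

Lemma sum_lambda j k (x : nat -> R) : (j <= k)%N ->
  \sum_(i < k.+1) lambda j x i = \sum_(i < k) x i.
Proof.
elim: k => [|k IH] hj.
  have -> : j = 0%N by lia.
  by rewrite big_ord_recr !big_ord0 /lambda /= add0r.
rewrite big_ord_recr /=.
case: (ltnP j k.+1) => hjk.
  rewrite IH; last by lia.
  rewrite [in RHS]big_ord_recr /= /lambda.
  have h1 : (k.+1 < j)%N = false by lia.
  have h2 : (k.+1 == j) = false by lia.
  by rewrite h1 h2.
have -> : j = k.+1 by lia.
rewrite /lambda ltnn eqxx addr0; apply: eq_bigr => i _.
by rewrite ltn_ord.
Qed.

Lemma lambda_shift m i k (x : nat -> R) :
  lambda (m.+1 + i)%N x (m.+1 + k)%N = lambda i (fun k => x (m.+1 + k)%N) k.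
Proof.
rewrite /lambda ltn_add2l eqn_add2l.
case: ltnP => // h; case: eqP => // h2.
case: k h h2 => [|k] h h2; first by lia.
by rewrite addnS.
Qed.

Lemma face_conv_l m n (t s : smap R d) j : (0 < m)%N -> (j <= m)%N ->
  face j (Defs.conv m n t s) = Defs.conv m.-1 n (face j t) s.
Proof.
move=> hm hj; apply: funext => x; rewrite /face /Defs.conv /=.
case: m hm hj => [//|m] _ hj /=.
have ha : \sum_(i < m.+2) lambda j x i = \sum_(i < m.+1) x i by exact: sum_lambda.
have hl : forall i, lambda j x (m.+2 + i)%N = x (m.+1 + i)%N.
  move=> i; rewrite /lambda.
  have h1 : (m.+2 + i < j)%N = false by lia.
  have h2 : (m.+2 + i == j) = false by lia.
  by rewrite h1 h2.
have hb : \sum_(i < n.+1) lambda j x (m.+2 + i)%N = \sum_(i < n.+1) x (m.+1 + i)%N.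
  by apply: eq_bigr => i _; rewrite hl.
rewrite ha hb (lambda_if1 j m x hj) (lambda_if j m x _ hj).
congr (if _ then _ else if _ then s _ else _ *: _ + _ *: s _); by apply: funext => i; rewrite hl.
Qed.

Lemma face_conv_r m n (t s : smap R d) i : (0 < n)%N -> (i <= n)%N ->
  face (m.+1 + i)%N (Defs.conv m n t s) = Defs.conv m n.-1 t (face i s).
Proof.
move=> hn hi; apply: funext => x; rewrite /face /Defs.conv /=.
case: n hn hi => [//|n] _ hi /=.
have hl : forall k, (k <= m)%N -> lambda (m.+1 + i)%N x k = x k.
  move=> k hk; rewrite /lambda.
  have h1 : (k < m.+1 + i)%N by lia.
  by rewrite h1.
have ha : \sum_(k < m.+1) lambda (m.+1 + i)%N x k = \sum_(k < m.+1) x k.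
  by apply: eq_bigr => k _; rewrite hl // -ltnS.
have hb : \sum_(k < n.+2) lambda (m.+1 + i)%N x (m.+1 + k)%N = \sum_(k < n.+1) x (m.+1 + k)%N.
  under eq_bigr do rewrite lambda_shift.
  exact: (sum_lambda _ _ (fun k => x (m.+1 + k)%N) hi).
have hs : forall k, lambda (m.+1 + i)%N x (m.+1 + k)%N = lambda i (fun k => x (m.+1 + k)%N) k.
  by move=> k; rewrite lambda_shift.
rewrite ha hb.
have E1 : (fun k => if (k <= n.+1)%N then lambda (m.+1 + i)%N x (m.+1 + k)%N else 0) =
  lambda i (fun k => if (k <= n)%N then x (m.+1 + k)%N else 0).
  rewrite -(lambda_if1 _ _ _ hi); apply: funext => k; by rewrite hs.
have E2 : forall a, (fun k => (if (k <= n.+1)%N then lambda (m.+1 + i)%N x (m.+1 + k)%N else 0) / a) =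
  lambda i (fun k => (if (k <= n)%N then x (m.+1 + k)%N else 0) / a).
  move=> a; rewrite -(lambda_if _ _ _ _ hi); apply: funext => k; by rewrite hs.
rewrite E1 E2.
congr (if _ then t _ else if _ then _ else _ *: t _ + _); apply: funext => k;
  by case: ifP => // hk; rewrite hl.
Qed.
End Aux.

Definition Wt {R : realType} {d : nat} (k : nat) (rho : smap R d) (e : algC * smap R d) : algC :=
  if `[< same_simplex k e.2 rho >] then e.1 else 0.

Lemma coefE (R : realType) (d k : nat) (c : chain R d) rho :
  coef k c rho = \sum_(e <- c) Wt k rho e.
Proof. by rewrite /coef big_mkcond. Qed.

Local Arguments iota : simpl never.

Lemma border_succ (R : realType) (d : nat) q k (c : chain R d) :
  border q k.+1 c =
  flatten [seq [seq (q ^+ j * e.1, face j e.2) | j <- locked (iota 0 k.+2)] | e <- c].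
Proof. by rewrite -lock. Qed.

Theorem lemma4p2 (R : realType) (d N : nat) (q : algC) (X : set 'rV[R]_d)
    (m n : nat) (tau sigma : chain R d) :
  prime N -> (3 <= N)%N -> q ^+ N = 1 -> q != 1 ->
  convex_subset X ->
  is_chain q X m tau -> is_chain q X n sigma -> (0 < m * n)%N ->
  chain_eq (m + n)
    (border q (m + n + 1) (cprod m n tau sigma))
    (cprod m.-1 n (border q m tau) sigma
       ++ chain_scale (q ^+ m.+1) (cprod m n.-1 tau (border q n sigma))).
Proof.
move=> _ _ _ _ _ _ _ hmn rho.
case: m hmn => [|m]; first by rewrite mul0n.
case: n => [|n]; first by rewrite muln0.
move=> _; rewrite addn1 !border_succ !coefE big_cat.
rewrite /chain_scale /cprod big_map !big_flatten !big_map !big_allpairs_dep.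
rewrite /=.
rewrite -big_split; apply: eq_bigr => e1 _.
under [X in _ = X + _]eq_bigr do rewrite big_map.
rewrite exchange_big /= big_map big_flatten big_map.
rewrite -big_split; apply: eq_bigr => e2 _.
rewrite /= -!lock !big_map.
have -> : ((m.+1 + n.+1).+2 = m.+2 + n.+2)%N by lia.
rewrite iotaD add0n -[in iota m.+2 _](addn0 m.+2) (iotaDl m.+2 0) big_cat big_map.
congr (_ + _).
  rewrite big_seq_cond [RHS]big_seq_cond; apply: eq_bigr => j.
  rewrite mem_iota andbT add0n => /andP[_ hj].
  by rewrite face_conv_l // mulrA.
rewrite big_seq_cond [RHS]big_seq_cond; apply: eq_bigr => j.
rewrite mem_iota andbT add0n => /andP[_ hj] /=.
rewrite face_conv_r //.
congr (Wt _ _ (_, _)).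
rewrite exprD; ring.
Qed.
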